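(* The single-mode creation operator $\hat a^\dagger$ has approximate operator coherent rank $2$, and for any integer $n\ge0$ and coefficients $b_0,\dots,b_n\in\mathbb C$ the operator $\sum_{l=0}^n b_l(\hat a^\dagger)^l$ has approximate operator coherent rank at most $n+1$.
   Context: Single mode with Fock basis $\{|n\rangle\}$, creation operator $\hat a^\dagger=\sum_{n\ge0}\sqrt{n+1}|n+1\rangle\langle n|$. Coherent state $|\alpha\rangle=e^{-|\alpha|^2/2}\sum_n\frac{\alpha^n}{\sqrt{n!}}|n\rangle$. A state has coherent rank $k$ if it is a superposition of $k$ coherent states; its approximate coherent rank is the smallest $k$ such that for every $\delta>0$ there is a coherent rank $k$ state with fidelity greater than $1-\delta$ to it (after normalization). An operator $\hat A$ has approximate operator coherent rank $\ell$ iff $\hat A|\alpha\rangle$ has approximate coherent rank at most $\ell$ for every coherent state $|\alpha\rangle$ (and this bound is attained for at least one coherent state). *)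

(* Defs.v *)
From Stdlib Require Import Reals List Factorial.
From Coquelicot Require Import Coquelicot.
Open Scope R_scope.

(* A single-mode state is represented by its Fock coefficients
   psi n = <n|psi>, i.e. a sequence nat -> C (all states used below are in l^2). *)
Definition state := nat -> C.
Definition operator := state -> state.

Definition coh (alpha : C) : state := fun n =>
  Cmult (RtoC (exp (- (Cmod alpha ^ 2) / 2) / sqrt (INR (Factorial.fact n)))) (Cpow alpha n).

Definition adag : operator := fun psi n =>
  match n with
  | O => RtoC 0
  | S m => Cmult (RtoC (sqrt (INR (S m)))) (psi m)
  end.

Definition adag_pow (l : nat) : operator := fun psi => Nat.iter l adag psi.

Fixpoint csum (f : nat -> C) (n : nat) : C :=
  match n with
  | O => f O
  | S m => Cplus (csum f m) (f (S m))
  end.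

Definition poly_adag (b : nat -> C) (n : nat) : operator := fun psi k =>
  csum (fun l => Cmult (b l) (adag_pow l psi k)) n.

Definition inner (psi phi : state) : C :=
  (Series (fun n => Re (Cmult (Cconj (psi n)) (phi n))),
   Series (fun n => Im (Cmult (Cconj (psi n)) (phi n)))).

Definition norm2 (psi : state) : R := Series (fun n => Cmod (psi n) ^ 2).

Definition fidelity (psi phi : state) : R :=
  (Cmod (inner psi phi)) ^ 2 / (norm2 psi * norm2 phi).

Definition nonzero (psi : state) : Prop := exists n, psi n <> RtoC 0.

Definition superpos (l : list (C * C)) : state := fun m =>
  fold_right (fun p acc => Cplus (Cmult (fst p) (coh (snd p) m)) acc) (RtoC 0) l.

Definition coh_rank_le (phi : state) (k : nat) : Prop :=
  nonzero phi /\ exists l : list (C * C), (length l <= k)%nat /\ phi = superpos l.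

(* psi can be approximated to arbitrary fidelity by states of coherent rank <= k.
   Convention: the zero vector counts as approximable (it is the empty superposition). *)
Definition approximable (psi : state) (k : nat) : Prop :=
  (forall n, psi n = RtoC 0) \/
  (forall delta : R, 0 < delta ->
     exists phi, coh_rank_le phi k /\ fidelity psi phi > 1 - delta).

Definition approx_coh_rank (psi : state) (k : nat) : Prop :=
  approximable psi k /\ forall j, (j < k)%nat -> ~ approximable psi j.

Definition approx_coh_rank_le (psi : state) (k : nat) : Prop :=
  exists j, (j <= k)%nat /\ approx_coh_rank psi j.

Definition op_approx_coh_rank_le (A : operator) (l : nat) : Prop :=
  forall alpha : C, approx_coh_rank_le (A (coh alpha)) l.

Definition op_approx_coh_rank (A : operator) (l : nat) : Prop :=
  op_approx_coh_rank_le A l /\ exists alpha : C, approx_coh_rank (A (coh alpha)) l.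

(* Main.v *)
Require Import Defs.
From Stdlib Require Import Reals List.
From Coquelicot Require Import Coquelicot.
From Stdlib Require Import Lra Lia Psatz Classical Factorial FunctionalExtensionality.
Open Scope R_scope.

Lemma Cmod2 (z : C) : Cmod z ^ 2 = fst z ^ 2 + snd z ^ 2.
Proof.
  unfold Cmod. rewrite pow2_sqrt; [lra|]. nra.
Qed.

Lemma amgm (p q t : R) : 0 < t -> 2 * p * q <= t * p ^ 2 + q ^ 2 / t.
Proof.
  intro Ht. assert (0 <= (t*p - q)^2 / t) by (apply Rdiv_le_0_compat; [apply pow2_ge_0 | lra]).
  replace ((t*p - q)^2 / t) with (t * p^2 - 2 * p * q + q^2 / t) in H by (field; lra). lra.
Qed.

Lemma pw_ineqs (z w : C) (t : R) : 0 < t ->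
  Rabs (Re (Cmult (Cconj z) w)) <= 2 * Cmod z ^ 2 + Cmod (Cminus w z) ^ 2 /\
  Rabs (Im (Cmult (Cconj z) w)) <= 2 * Cmod z ^ 2 + 2 * Cmod (Cminus w z) ^ 2 /\
  Cmod w ^ 2 <= 2 * Cmod z ^ 2 + 2 * Cmod (Cminus w z) ^ 2 /\
  Cmod w ^ 2 <= (1 + t) * Cmod z ^ 2 + (1 + / t) * Cmod (Cminus w z) ^ 2 /\
  (1 - t / 2) * Cmod z ^ 2 - Cmod (Cminus w z) ^ 2 / (2 * t) <= Re (Cmult (Cconj z) w) /\
  Re (Cmult (Cconj z) w) <= t * Cmod z ^ 2 / 2 + Cmod w ^ 2 / (2 * t).
Proof.
  intros Ht. rewrite !Cmod2.
  destruct z as [x y], w as [u v]. unfold Re, Im, Cconj, Cmult, Cminus, Cplus, Copp; cbn [fst snd].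
  pose proof (amgm x (u-x) t Ht). pose proof (amgm y (v-y) t Ht).
  pose proof (amgm x u t Ht). pose proof (amgm y v t Ht).
  assert (forall s, 0 <= s ^ 2) by (intro; apply pow2_ge_0).
  pose proof (H3 (x - (u-x))). pose proof (H3 (x + (u-x))).
  pose proof (H3 (y - (v-y))). pose proof (H3 (y + (v-y))).
  pose proof (H3 (x - v)). pose proof (H3 (x + v)).
  pose proof (H3 (y - u)). pose proof (H3 (y + u)).
  pose proof (H3 (u - x)). pose proof (H3 (v - y)).
  assert (Hq : (u-x)^2/t = (u-x)^2 * / t) by reflexivity.
  repeat split.
  - apply Rabs_le; split; nra.
  - apply Rabs_le; split; nra.
  - nra.
  - assert (E : (1 + t) * (x^2+y^2) + (1 + / t) * ((u + - x)^2 + (v + - y)^2) - (u^2+v^2)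
          = ((t*x - (u-x))^2 + (t*y - (v-y))^2) / t) by (field; lra).
    assert (0 <= ((t*x - (u-x))^2 + (t*y - (v-y))^2) / t) by (apply Rdiv_le_0_compat; [apply Rplus_le_le_0_compat; apply pow2_ge_0|lra]).
    lra.
  - assert (E : x * u - - y * v - ((1 - t / 2) * (x^2+y^2) - ((u + - x)^2 + (v + - y)^2) / (2 * t))
          = ((t*x + (u-x))^2 + (t*y + (v-y))^2) / (2 * t)) by (field; lra).
    assert (0 <= ((t*x + (u-x))^2 + (t*y + (v-y))^2) / (2*t)) by (apply Rdiv_le_0_compat; [apply Rplus_le_le_0_compat; apply pow2_ge_0|lra]).
    lra.
  - assert (E : t * (x^2+y^2) / 2 + (u^2+v^2) / (2 * t) - (x * u - - y * v)
          = ((t*x - u)^2 + (t*y - v)^2) / (2 * t)) by (field; lra).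
    assert (0 <= ((t*x - u)^2 + (t*y - v)^2) / (2*t)) by (apply Rdiv_le_0_compat; [apply Rplus_le_le_0_compat; apply pow2_ge_0|lra]).
    lra.
Qed.

Lemma Series_zero : Series (fun _ => 0) = 0.
Proof.
  rewrite (Series_ext (fun _ => 0) (fun n => 0 * 0)) by (intro; ring).
  rewrite Series_scal_l. ring.
Qed.

Lemma Series_le_gen (a b : nat -> R) : ex_series a -> ex_series b ->
  (forall n, a n <= b n) -> Series a <= Series b.
Proof.
  intros Ha Hb H.
  assert (0 <= Series (fun n => b n - a n)).
  { rewrite <- Series_zero. apply Series_le.
    - intro n. specialize (H n). lra.
    - apply (ex_series_minus b a Hb Ha). }
  rewrite Series_minus in H0 by assumption. lra.
Qed.

Lemma exs_le (a b : nat -> R) : (forall n, Rabs (a n) <= b n) -> ex_series b -> ex_series a.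
Proof.
  intros H Hb. apply (ex_series_le a b); [|exact Hb]. intro n. exact (H n).
Qed.

Lemma exs_lin (a e : nat -> R) (c1 c2 : R) : ex_series a -> ex_series e ->
  ex_series (fun m => c1 * a m + c2 * e m).
Proof.
  intros Ha He. apply (ex_series_plus (fun m => c1 * a m) (fun m => c2 * e m)).
  - apply (ex_series_scal_l c1 a Ha).
  - apply (ex_series_scal_l c2 e He).
Qed.

Lemma Series_lin (a e : nat -> R) (c1 c2 : R) : ex_series a -> ex_series e ->
  Series (fun m => c1 * a m + c2 * e m) = c1 * Series a + c2 * Series e.
Proof.
  intros Ha He. rewrite Series_plus.
  - rewrite !Series_scal_l. reflexivity.
  - apply (ex_series_scal_l c1 a Ha).
  - apply (ex_series_scal_l c2 e He).
Qed.

Lemma is_series_zero : is_series (fun _ : nat => 0) 0.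
Proof.
  unfold is_series. eapply filterlim_ext; [|apply filterlim_const].
  intro n. simpl. rewrite sum_n_const. simpl. ring.
Qed.

Lemma Series_single (c : R) (k : nat) :
  Series (fun m => if Nat.eqb m k then c else 0) = c.
Proof.
  rewrite (Series_incr_n_aux _ k).
  2:{ intros j Hj. destruct (Nat.eqb_spec j k); [lia|reflexivity]. }
  apply is_series_unique. apply is_series_decr_1.
  rewrite Nat.add_0_r, Nat.eqb_refl.
  match goal with |- is_series _ ?l => assert (Hz : l = 0) by (exact (@plus_opp_r R_AbelianGroup c)); rewrite Hz end.
  eapply is_series_ext; [|apply is_series_zero].
  intro n. simpl. destruct (Nat.eqb_spec (k + S n) k); [lia|]. reflexivity.
Qed.

Lemma approx_of_l2 (psi : state) (k : nat) :
  ex_series (fun m => Cmod (psi m) ^ 2) ->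
  (forall eta, 0 < eta -> exists L : list (C * C), (length L <= k)%nat /\
      ex_series (fun m => Cmod (Cminus (superpos L m) (psi m)) ^ 2) /\
      Series (fun m => Cmod (Cminus (superpos L m) (psi m)) ^ 2) <= eta) ->
  approximable psi k.
Proof.
  intros Ha HL.
  destruct (classic (forall n, psi n = RtoC 0)) as [H0|H0]; [left; exact H0| right].
  apply not_all_ex_not in H0. destruct H0 as [n0 Hn0].
  assert (HPsi : 0 < norm2 psi).
  { apply Rlt_le_trans with (Cmod (psi n0) ^2).
    - apply pow_lt. apply Cmod_gt_0. exact Hn0.
    - rewrite <- (Series_single (Cmod (psi n0)^2) n0). unfold norm2. apply Series_le; [|exact Ha].
      intro m. destruct (Nat.eqb_spec m n0).
      + subst. split; [apply pow2_ge_0|lra].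
      + split; [lra | apply pow2_ge_0]. }
  intros delta Hdelta.
  set (t := Rmin delta 1 / 8).
  assert (Ht : 0 < t) by (unfold t; apply Rmin_case; lra).
  assert (Ht1 : t <= 1/8) by (unfold t; pose proof (Rmin_r delta 1); lra).
  assert (Ht2 : 1 - 8 * t >= 1 - delta) by (unfold t; pose proof (Rmin_l delta 1); lra).
  destruct (HL (t^2 * norm2 psi)) as [L [Hlen [He HD]]].
  { apply Rmult_lt_0_compat; [apply pow_lt|]; assumption. }
  set (phi := superpos L) in *.
  set (Psi := norm2 psi) in *.
  set (a := fun m => Cmod (psi m) ^ 2) in *.
  set (e := fun m => Cmod (Cminus (phi m) (psi m)) ^ 2) in *.
  set (p := fun m => Cmod (phi m) ^ 2).
  set (r := fun m => Re (Cmult (Cconj (psi m)) (phi m))).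
  set (i := fun m => Im (Cmult (Cconj (psi m)) (phi m))).
  pose proof (fun m => pw_ineqs (psi m) (phi m) t Ht) as PW.
  assert (Hp : ex_series p).
  { apply (exs_le p (fun m => 2 * a m + 2 * e m)); [|apply exs_lin; assumption].
    intro m. unfold p. rewrite Rabs_pos_eq by apply pow2_ge_0. apply (PW m). }
  assert (Hr : ex_series r).
  { apply (exs_le r (fun m => 2 * a m + 1 * e m)); [|apply exs_lin; assumption].
    intro m. unfold r. rewrite Rmult_1_l. apply (PW m). }
  assert (Hi : ex_series i).
  { apply (exs_le i (fun m => 2 * a m + 2 * e m)); [|apply exs_lin; assumption].
    intro m. unfold i. apply (PW m). }
  assert (HD0 : 0 <= Series e).
  { rewrite <- Series_zero. apply Series_le; [|exact He]. intro m; split; [lra|apply pow2_ge_0]. }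
  assert (HA : (1 - t/2) * Psi + (- / (2 * t)) * Series e <= Series r).
  { unfold Psi, norm2. fold a. rewrite <- Series_lin by assumption.
    apply Series_le_gen; [apply exs_lin; assumption| exact Hr|].
    intro m. destruct (PW m) as (_ & _ & _ & _ & H5 & _). unfold r, a, e. unfold Rdiv in H5. lra. }
  assert (HA2 : Series r <= (t/2) * Psi + (/ (2 * t)) * Series p).
  { unfold Psi, norm2. fold a. rewrite <- Series_lin by assumption.
    apply Series_le_gen; [exact Hr|apply exs_lin; assumption|].
    intro m. destruct (PW m) as (_ & _ & _ & _ & _ & H6). unfold r, a, p. unfold Rdiv in H6. lra. }
  assert (HN : Series p <= (1 + t) * Psi + (1 + / t) * Series e).
  { unfold Psi, norm2. fold a. rewrite <- Series_lin by assumption.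
    apply Series_le_gen; [exact Hp|apply exs_lin; assumption|].
    intro m. destruct (PW m) as (_ & _ & _ & H4 & _ & _). unfold p, a, e. lra. }
  assert (HD1 : / (2 * t) * Series e <= t / 2 * Psi).
  { replace (t / 2 * Psi) with (/ (2 * t) * (t^2 * Psi)) by (field; lra).
    apply Rmult_le_compat_l; [left; apply Rinv_0_lt_compat; lra| exact HD]. }
  assert (HD2 : / t * Series e <= t * Psi).
  { replace (t * Psi) with (/ t * (t^2 * Psi)) by (field; lra).
    apply Rmult_le_compat_l; [left; apply Rinv_0_lt_compat; lra| exact HD]. }
  assert (HAlow : (1 - t) * Psi <= Series r) by nra.
  assert (HNup : Series p <= (1 + t)^2 * Psi) by nra.
  assert (HNpos : 0 < Series p).
  { assert (0 < / (2 * t) * Series p) by nra.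
    assert (0 < / (2 * t)) by (apply Rinv_0_lt_compat; lra). nra. }
  exists phi. split.
  - split.
    + destruct (classic (exists n, phi n <> RtoC 0)) as [Hx|Hx]; [exact Hx|].
      exfalso.
      assert (Series r = 0).
      { rewrite <- Series_zero. apply Series_ext. intro m. unfold r.
        destruct (classic (phi m = RtoC 0)) as [Hm|Hm].
        - rewrite Hm. rewrite Cmult_0_r. reflexivity.
        - exfalso. apply Hx. exists m. exact Hm. }
      nra.
    + exists L. split; [exact Hlen| reflexivity].
  - unfold fidelity, inner. fold r i. rewrite Cmod2. cbn [fst snd].
    change (norm2 phi) with (Series p). fold Psi.
    assert (HPN : 0 < Psi * Series p) by nra.
    apply Rlt_gt. apply Rle_lt_trans with (1 - 8 * t); [lra|].
    apply (Rmult_lt_reg_r (Psi * Series p)); [exact HPN|].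
    unfold Rdiv. rewrite Rmult_assoc, Rinv_l by lra. rewrite Rmult_1_r.
    assert (((1 - t) * Psi)^2 <= Series r ^ 2) by (apply pow_incr; nra).
    assert (0 <= Series i ^ 2) by apply pow2_ge_0.
    assert ((1 - 8 * t) * (Psi * Series p) <= (1 - 8*t) * (Psi * ((1+t)^2 * Psi))).
    { apply Rmult_le_compat_l; [lra|]. apply Rmult_le_compat_l; lra. }
    assert (0 < (4 * t + 16 * t^2 + 8 * t^3) * Psi^2).
    { apply Rmult_lt_0_compat; [nra| apply pow_lt; lra]. }
    nra.
Qed.


Lemma csum_ext_le (f g : nat -> C) n : (forall j, (j <= n)%nat -> f j = g j) -> csum f n = csum g n.
Proof.
  induction n; intro H; simpl. - apply H; lia.
  - rewrite IHn by (intros; apply H; lia). rewrite H by lia. reflexivity.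
Qed.

Lemma csum_scal (c : C) (f : nat -> C) n : csum (fun j => Cmult c (f j)) n = Cmult c (csum f n).
Proof. induction n; simpl; [reflexivity|]. rewrite IHn. ring. Qed.

Lemma csum_plus (f g : nat -> C) n : csum (fun j => Cplus (f j) (g j)) n = Cplus (csum f n) (csum g n).
Proof. induction n; simpl; [reflexivity|]. rewrite IHn. ring. Qed.

Lemma csum_minus (f g : nat -> C) n : csum (fun j => Cminus (f j) (g j)) n = Cminus (csum f n) (csum g n).
Proof. induction n; simpl; [reflexivity|]. rewrite IHn. ring. Qed.

Lemma csum_swap (f : nat -> nat -> C) n1 n2 :
  csum (fun i => csum (fun j => f i j) n2) n1 = csum (fun j => csum (fun i => f i j) n1) n2.
Proof.
  induction n1; simpl; [reflexivity|]. rewrite IHn1. rewrite <- csum_plus. reflexivity.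
Qed.

Lemma csum_shift (f : nat -> C) n : csum f (S n) = Cplus (f O) (csum (fun j => f (S j)) n).
Proof.
  induction n; simpl; [reflexivity|]. simpl in IHn. rewrite IHn. ring.
Qed.

Lemma csum_Cmod (f : nat -> C) n : Cmod (csum f n) <= sum_f_R0 (fun j => Cmod (f j)) n.
Proof.
  induction n; simpl; [lra|]. eapply Rle_trans; [apply Cmod_triangle|]. lra.
Qed.

Lemma csum_RtoC (g : nat -> R) n : csum (fun j => RtoC (g j)) n = RtoC (sum_f_R0 g n).
Proof. induction n; simpl; [reflexivity|]. rewrite IHn. rewrite RtoC_plus. reflexivity. Qed.

Lemma csum_zero_beyond (f : nat -> C) l N : (l <= N)%nat -> (forall k, (l < k)%nat -> f k = RtoC 0) ->
  csum f N = csum f l.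
Proof.
  intros HlN H. induction N.
  - assert (l = 0%nat) by lia. subst. reflexivity.
  - destruct (Nat.eq_dec l (S N)). + subst. reflexivity.
    + simpl. rewrite IHN by lia. rewrite H by lia. ring.
Qed.

Lemma csum_zero_lt (f : nat -> C) n : (forall i, (i < n)%nat -> f i = RtoC 0) -> csum f n = f n.
Proof.
  intro H. destruct n; simpl; [reflexivity|].
  assert (csum f n = RtoC 0).
  { clear -H. induction n; simpl. - apply H; lia. - rewrite IHn by (intros; apply H; lia). rewrite H by lia. ring. }
  rewrite H0. apply Cplus_0_l.
Qed.

Lemma csum_delta (X : C) l m : csum (fun j => if Nat.eqb j l then X else RtoC 0) m = if Nat.leb l m then X else RtoC 0.
Proof.
  induction m; cbn [csum].
  - destruct l; simpl; reflexivity.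
  - rewrite IHm. destruct (Nat.eqb_spec (S m) l); destruct (Nat.leb_spec l m); destruct (Nat.leb_spec l (S m));
    try lia; ring.
Qed.

Lemma sum_ge_term (f : nat -> R) j N : (forall i, 0 <= f i) -> (j <= N)%nat -> f j <= sum_f_R0 f N.
Proof.
  intros H Hj. induction N.
  - assert (j = 0%nat) by lia. subst. simpl. lra.
  - destruct (Nat.eq_dec j (S N)). + subst. simpl. pose proof (cond_pos_sum f N H). lra.
    + simpl. pose proof (H (S N)). specialize (IHN ltac:(lia)). lra.
Qed.

Fixpoint binom (n k : nat) : nat :=
  match n, k with
  | _, O => 1%nat
  | O, S _ => 0%nat
  | S n', S k' => (binom n' k' + binom n' (S k'))%nat
  end.

Lemma binom_gt n k : (n < k)%nat -> binom n k = 0%nat.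
Proof.
  revert k; induction n; intros k H; destruct k; simpl; try lia; try reflexivity.
  rewrite !IHn by lia. reflexivity.
Qed.

Lemma binom_n0 n : binom n 0 = 1%nat.
Proof. destruct n; reflexivity. Qed.

Lemma binom_nn n : binom n n = 1%nat.
Proof. induction n; simpl; [reflexivity|]. rewrite IHn, binom_gt by lia. reflexivity. Qed.

Lemma binom_n1 n : binom n 1 = n.
Proof. induction n; simpl; [reflexivity|]. rewrite IHn, binom_n0. lia. Qed.

Lemma binom_Sn n : binom (S n) n = S n.
Proof.
  induction n; [reflexivity|].
  change (binom (S (S n)) (S n)) with (binom (S n) n + binom (S n) (S n))%nat.
  rewrite IHn, binom_nn. lia.
Qed.

Lemma binom_absorb m l : (binom (S m) (S l) * S l = S m * binom m l)%nat.
Proof.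
  revert l; induction m; intro l.
  - destruct l; [reflexivity|].
    change (binom 1 (S (S l))) with (binom 0 (S l) + binom 0 (S (S l)))%nat.
    simpl. lia.
  - destruct l.
    + rewrite binom_n1, binom_n0. lia.
    + change (binom (S (S m)) (S (S l))) with (binom (S m) (S l) + binom (S m) (S (S l)))%nat.
      change (binom (S m) (S l)) with (binom m l + binom m (S l))%nat at 2.
      pose proof (IHm l). pose proof (IHm (S l)).
      assert (binom (S m) (S l) = binom m l + binom m (S l))%nat by reflexivity. nia.
Qed.

Lemma Cbinomial (a b : C) m : Cpow (Cplus a b) m =
  csum (fun j => Cmult (RtoC (INR (binom m j))) (Cmult (Cpow a (m - j)) (Cpow b j))) m.
Proof.
  induction m.
  - simpl. ring.
  - rewrite Cpow_S, IHm. rewrite csum_shift. cbv beta.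
    rewrite Nat.sub_0_r, binom_n0.
    assert (E3 : csum (fun j => Cmult (RtoC (INR (binom (S m) (S j)))) (Cmult (Cpow a (S m - S j)) (Cpow b (S j)))) m
       = Cplus (csum (fun j => Cmult (RtoC (INR (binom m j))) (Cmult (Cpow a (m - j)) (Cpow b (S j)))) m)
               (csum (fun j => Cmult (RtoC (INR (binom m (S j)))) (Cmult (Cpow a (m - j)) (Cpow b (S j)))) m)).
    { rewrite <- csum_plus. apply csum_ext_le. intros j Hj.
      change (binom (S m) (S j)) with (binom m j + binom m (S j))%nat.
      rewrite plus_INR, RtoC_plus. replace (S m - S j)%nat with (m - j)%nat by lia. ring. }
    rewrite E3.
    assert (E1 : csum (fun j => Cmult (RtoC (INR (binom m j))) (Cmult (Cpow a (m - j)) (Cpow b (S j)))) m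
               = Cmult b (csum (fun j => Cmult (RtoC (INR (binom m j))) (Cmult (Cpow a (m - j)) (Cpow b j))) m)).
    { rewrite <- csum_scal. apply csum_ext_le. intros j _. rewrite Cpow_S. ring. }
    assert (E2 : Cplus (Cmult (RtoC (INR 1)) (Cmult (Cpow a (S m)) (Cpow b 0))) (csum (fun j => Cmult (RtoC (INR (binom m (S j)))) (Cmult (Cpow a (m - j)) (Cpow b (S j)))) m)
               = Cmult a (csum (fun j => Cmult (RtoC (INR (binom m j))) (Cmult (Cpow a (m - j)) (Cpow b j))) m)).
    { rewrite <- csum_scal. destruct m.
      - simpl. ring.
      - rewrite (csum_shift (fun j => Cmult a _)). cbv beta. rewrite Nat.sub_0_r, binom_n0.
        cbn [csum]. rewrite (binom_gt (S m) (S (S m))) by lia.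
        assert (E4 : csum (fun j => Cmult (RtoC (INR (binom (S m) (S j)))) (Cmult (Cpow a (S m - j)) (Cpow b (S j)))) m
                  = csum (fun j => Cmult a (Cmult (RtoC (INR (binom (S m) (S j)))) (Cmult (Cpow a (S m - S j)) (Cpow b (S j))))) m).
        { apply csum_ext_le. intros j Hj. replace (S m - j)%nat with (S (S m - S j)) by lia. rewrite Cpow_S. ring. }
        rewrite E4. rewrite !Cpow_S. simpl INR. ring. }
    rewrite E1, (Cplus_comm (Cmult b _)), Cplus_assoc, E2. ring.
Qed.

Lemma Rbinomial (x y : R) m : (x + y) ^ m =
  sum_f_R0 (fun j => INR (binom m j) * (x ^ (m - j) * y ^ j)) m.
Proof.
  apply RtoC_inj. rewrite <- csum_RtoC, RtoC_pow, RtoC_plus, Cbinomial.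
  apply csum_ext_le. intros j _. rewrite !RtoC_mult, !RtoC_pow. reflexivity.
Qed.

Fixpoint coef (l k : nat) : R :=
  match l with
  | O => if Nat.eqb k 0 then 1 else 0
  | S l' => (match k with O => 0 | S k' => coef l' k' end) - coef l' k
  end.

Lemma coef_gt l k : (l < k)%nat -> coef l k = 0.
Proof.
  revert k; induction l; intros k H; simpl.
  - destruct (Nat.eqb_spec k 0); [lia|reflexivity].
  - destruct k; [lia|]. rewrite !IHl by lia. ring.
Qed.

Lemma coef_bound l k : Rabs (coef l k) <= 2 ^ l.
Proof.
  revert k; induction l; intro k; simpl.
  - destruct (Nat.eqb k 0); rewrite ?Rabs_R1, ?Rabs_R0; lra.
  - eapply Rle_trans; [apply Rabs_triang|]. rewrite Rabs_Ropp.
    pose proof (IHl k). destruct k.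
    + rewrite Rabs_R0. pose proof (pow_le 2 l ltac:(lra)). lra.
    + pose proof (IHl k). lra.
Qed.

Definition T (j l : nat) : C := csum (fun k => Cmult (RtoC (coef l k)) (Cpow (RtoC (INR k)) j)) l.

Lemma T_rec j l : T j (S l) = Cminus (csum (fun i => Cmult (RtoC (INR (binom j i))) (T i l)) j) (T j l).
Proof.
  unfold T.
  rewrite (csum_ext_le _ (fun k => Cminus (Cmult (RtoC (match k with O => 0 | S k' => coef l k' end)) (Cpow (RtoC (INR k)) j))
                                          (Cmult (RtoC (coef l k)) (Cpow (RtoC (INR k)) j)))).
  2:{ intros k _. simpl coef. rewrite RtoC_minus. ring. }
  rewrite csum_minus. rewrite csum_shift. cbn [csum]. rewrite coef_gt by lia.
  rewrite (csum_ext_le (fun k => Cmult (RtoC (coef l k)) (Cpow (RtoC (INR (S k))) j))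
             (fun k => csum (fun i => Cmult (RtoC (INR (binom j i))) (Cmult (RtoC (coef l k)) (Cpow (RtoC (INR k)) i))) j)).
  2:{ intros k _. rewrite S_INR, RtoC_plus, Cplus_comm, Cbinomial. rewrite <- csum_scal. apply csum_ext_le.
      intros i _. rewrite Cpow_1_l. ring. }
  rewrite csum_swap. 
  rewrite (csum_ext_le (fun i => csum (fun k => Cmult (RtoC (INR (binom j i))) (Cmult (RtoC (coef l k)) (Cpow (RtoC (INR k)) i))) l)
            (fun i => Cmult (RtoC (INR (binom j i))) (csum (fun k => Cmult (RtoC (coef l k)) (Cpow (RtoC (INR k)) i)) l))).
  2:{ intros i _. apply csum_scal. }
  simpl. ring.
Qed.

Lemma T_props l : (forall j, (j < l)%nat -> T j l = RtoC 0) /\ T l l = RtoC (INR (fact l)).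
Proof.
  induction l as [|l [H1 H2]].
  - split; [intros; lia|]. unfold T. simpl. ring.
  - split.
    + intros j Hj. rewrite T_rec.
      rewrite csum_zero_lt.
      2:{ intros i Hi. rewrite H1 by lia. ring. }
      destruct (Nat.eq_dec j l).
      * subst. rewrite binom_nn, H2. simpl INR. ring.
      * rewrite H1 by lia. ring.
    + rewrite T_rec. cbn [csum]. rewrite binom_nn.
      rewrite csum_zero_lt.
      2:{ intros i Hi. rewrite H1 by lia. ring. }
      rewrite binom_Sn, H2. rewrite fact_simpl, mult_INR. rewrite RtoC_mult. replace (INR 1) with 1 by reflexivity. ring.
Qed.

Lemma T_bound j l : Cmod (T j l) <= INR (S l) * 2 ^ l * INR l ^ j.
Proof.
  unfold T. eapply Rle_trans; [apply csum_Cmod|].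
  eapply Rle_trans.
  - apply (sum_Rle _ (fun _ => 2 ^ l * INR l ^ j)).
    intros k Hk. rewrite Cmod_mult, Cmod_R, Cmod_pow, Cmod_R.
    rewrite (Rabs_pos_eq (INR k)) by apply pos_INR.
    apply Rmult_le_compat; [apply Rabs_pos| apply pow_le, pos_INR| apply coef_bound|].
    apply pow_incr. split; [apply pos_INR| apply le_INR; lia].
  - rewrite sum_cte. lra.
Qed.

Ltac pos := repeat first [apply Rmult_le_pos | apply Rplus_le_le_0_compat | apply pow_le | apply pos_INR | apply Cmod_ge_0 | lra].

Definition G (alpha : C) (eps : R) (l m : nat) : C :=
  csum (fun k => Cmult (RtoC (coef l k)) (Cpow (Cplus alpha (RtoC (INR k * eps))) m)) l.

Lemma G_expand alpha eps l m : G alpha eps l m =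
  csum (fun j => Cmult (RtoC (INR (binom m j))) (Cmult (Cpow alpha (m - j)) (Cmult (RtoC (eps ^ j)) (T j l)))) m.
Proof.
  unfold G, T.
  rewrite (csum_ext_le _ (fun k => csum (fun j => Cmult (Cmult (RtoC (INR (binom m j))) (Cmult (Cpow alpha (m - j)) (RtoC (eps ^ j))))
                                                  (Cmult (RtoC (coef l k)) (Cpow (RtoC (INR k)) j))) m)).
  2:{ intros k _. rewrite Cbinomial, <- csum_scal. apply csum_ext_le. intros j _.
      rewrite RtoC_mult, Cpow_mult_l, RtoC_pow. ring. }
  rewrite csum_swap. apply csum_ext_le. intros j _. rewrite csum_scal. ring.
Qed.

Lemma G_err alpha eps l m : 0 < eps <= 1 ->
  Cmod (Cminus (Cmult (G alpha eps l m) (RtoC (/ eps ^ l)))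
               (Cmult (RtoC (INR (binom m l * fact l))) (Cpow alpha (m - l))))
  <= eps * (INR (S l) * 2 ^ l) * (Cmod alpha + INR l) ^ m.
Proof.
  intros He.
  destruct (T_props l) as [H1 H2].
  assert (Hmain : Cmult (RtoC (INR (binom m l * fact l))) (Cpow alpha (m - l))
     = csum (fun j => if Nat.eqb j l then Cmult (RtoC (INR (binom m l * fact l))) (Cpow alpha (m - l)) else RtoC 0) m).
  { rewrite csum_delta. destruct (Nat.leb_spec l m); [reflexivity|].
    rewrite binom_gt by lia. simpl. ring. }
  rewrite Hmain, G_expand, Cmult_comm, <- csum_scal, <- csum_minus.
  eapply Rle_trans; [apply csum_Cmod|].
  rewrite Rbinomial, scal_sum.
  apply sum_Rle. intros j Hj.
  destruct (Nat.eqb_spec j l).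
  - subst j. rewrite H2.
    match goal with |- Cmod ?z <= _ => assert (Hz : z = RtoC 0) end.
    { rewrite mult_INR, RtoC_mult.
      assert (XY : Cmult (RtoC (/ eps ^ l)) (RtoC (eps ^ l)) = RtoC 1).
      { rewrite <- RtoC_mult, Rinv_l; [reflexivity| apply pow_nonzero; lra]. }
      match goal with |- Cminus ?A ?B = _ =>
        replace A with (Cmult (Cmult (RtoC (/ eps ^ l)) (RtoC (eps ^ l))) (Cmult (RtoC (INR (binom m l))) (Cmult (Cpow alpha (m - l)) (RtoC (INR (fact l)))))) by ring end.
      rewrite XY. ring. }
    rewrite Hz, Cmod_0. pos.
  - destruct (Nat.ltb_spec j l).
    + rewrite H1 by lia.
      match goal with |- Cmod ?z <= _ => assert (Hz : z = RtoC 0) by ring end.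
      rewrite Hz, Cmod_0. pos.
    + match goal with |- Cmod (Cminus ?X _) <= _ => replace (Cminus X (RtoC 0)) with X by ring end.
      rewrite !Cmod_mult, !Cmod_R, Cmod_pow.
      rewrite (Rabs_pos_eq (/ eps ^ l)) by (left; apply Rinv_0_lt_compat, pow_lt; lra).
      rewrite (Rabs_pos_eq (INR _)) by apply pos_INR.
      rewrite (Rabs_pos_eq (eps ^ j)) by (apply pow_le; lra).
      replace j with ((j - l) + l)%nat at 3 by lia. rewrite pow_add.
      pose proof (T_bound j l) as HT.
      assert (He1 : eps ^ (j - l) <= eps).
      { replace (j - l)%nat with (S (j - l - 1)) by lia. simpl.
        pose proof (pow_le eps (j - l - 1) ltac:(lra)).
        assert (eps ^ (j - l - 1) <= 1) by (rewrite <- (pow1 (j - l - 1)); apply pow_incr; lra). nra. }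
      assert (Hel : eps ^ l <> 0) by (apply pow_nonzero; lra).
      set (Bm := INR (binom m j)). set (A := Cmod alpha ^ (m - j)). set (Tm := Cmod (T j l)).
      assert (0 <= Bm * A) by (unfold Bm, A; pos).
      assert (0 <= Tm) by apply Cmod_ge_0.
      assert (0 <= eps ^ (j - l)) by (apply pow_le; lra).
      replace (/ eps ^ l * (Bm * (A * (eps ^ (j - l) * eps ^ l * Tm)))) with ((Bm * A) * (eps ^ (j - l) * Tm)) by (field; exact Hel).
      replace (Bm * (A * INR l ^ j) * (eps * (INR (S l) * 2 ^ l))) with ((Bm * A) * (eps * (INR (S l) * 2 ^ l * INR l ^ j))) by ring.
      apply Rmult_le_compat_l; [assumption|].
      apply Rmult_le_compat; assumption.
Qed.


Definition Ec (alpha : C) : R := exp (- (Cmod alpha ^ 2) / 2).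

Lemma sqrt_fact_pos m : 0 < sqrt (INR (fact m)).
Proof. apply sqrt_lt_R0. apply lt_0_INR. apply lt_O_fact. Qed.

Lemma adag_pow_coh alpha l m : adag_pow l (coh alpha) m =
  Cmult (RtoC (Ec alpha / sqrt (INR (fact m)) * INR (binom m l * fact l))) (Cpow alpha (m - l)).
Proof.
  revert m; induction l; intro m.
  - unfold adag_pow. simpl Nat.iter. unfold coh, Ec. rewrite binom_n0, Nat.sub_0_r.
    simpl fact. rewrite Nat.mul_1_r. simpl INR. rewrite Rmult_1_r. reflexivity.
  - unfold adag_pow. simpl Nat.iter. destruct m.
    + simpl adag. rewrite (binom_gt 0 (S l)) by lia. simpl. rewrite Rmult_0_r. ring.
    + unfold adag at 1. fold (adag_pow l (coh alpha) m). rewrite IHl.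
      replace (S m - S l)%nat with (m - l)%nat by reflexivity.
      assert (Hn : (binom (S m) (S l) * fact (S l) = S m * (binom m l * fact l))%nat).
      { rewrite fact_simpl. pose proof (binom_absorb m l). nia. }
      rewrite Hn, fact_simpl, !mult_INR.
      rewrite sqrt_mult by (apply pos_INR).
      pose proof (sqrt_fact_pos m) as Hq.
      assert (Hs : 0 < sqrt (INR (S m))) by (apply sqrt_lt_R0, lt_0_INR; lia).
      assert (Hss : sqrt (INR (S m)) * sqrt (INR (S m)) = INR (S m)) by (apply sqrt_sqrt, pos_INR).
      assert (Hr : sqrt (INR (S m)) * (Ec alpha / sqrt (INR (fact m)) * (INR (binom m l) * INR (fact l)))
         = Ec alpha / (sqrt (INR (S m)) * sqrt (INR (fact m))) * (INR (S m) * (INR (binom m l) * INR (fact l)))).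
      { set (s := sqrt (INR (S m))) in *. rewrite <- Hss. field. split; lra. }
      rewrite Cmult_assoc, <- RtoC_mult, Hr. reflexivity.
Qed.

Definition Qp (alpha : C) (b : nat -> C) (n m : nat) : C :=
  csum (fun l => Cmult (b l) (Cmult (RtoC (INR (binom m l * fact l))) (Cpow alpha (m - l)))) n.

Lemma psi_formula alpha b n m : poly_adag b n (coh alpha) m =
  Cmult (RtoC (Ec alpha / sqrt (INR (fact m)))) (Qp alpha b n m).
Proof.
  unfold poly_adag, Qp. rewrite <- csum_scal. apply csum_ext_le. intros l _.
  rewrite adag_pow_coh, RtoC_mult. ring.
Qed.

Lemma superpos_seq (F : nat -> C * C) m n :
  superpos (map F (seq 0 (S n))) m = csum (fun k => Cmult (fst (F k)) (coh (snd (F k)) m)) n.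
Proof.
  unfold superpos.
  assert (Hg : forall a, fold_right (fun p acc => Cplus (Cmult (fst p) (coh (snd p) m)) acc) (RtoC 0) (map F (seq a (S n)))
     = csum (fun k => Cmult (fst (F (a + k)%nat)) (coh (snd (F (a + k)%nat)) m)) n).
  { induction n; intro a.
    - simpl. rewrite Nat.add_0_r. ring.
    - change (seq a (S (S n))) with (a :: seq (S a) (S n)).
      change (map F (a :: seq (S a) (S n))) with (F a :: map F (seq (S a) (S n))).
      change (fold_right ?f ?z (?x :: ?l)) with (f x (fold_right f z l)). cbv beta.
      rewrite IHn. rewrite (csum_shift (fun k => Cmult (fst (F (a + k)%nat)) (coh (snd (F (a + k)%nat)) m))).
      rewrite Nat.add_0_r. f_equal. apply csum_ext_le. intros j _. replace (S a + j)%nat with (a + S j)%nat by lia.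
      reflexivity. }
  apply Hg.
Qed.

Lemma exp_series x : is_series (fun m => x ^ m / INR (fact m)) (exp x).
Proof.
  eapply is_series_ext; [|apply (is_exp_Reals x)].
  intro m. simpl. rewrite pow_n_pow. unfold scal; simpl. unfold mult; simpl. unfold Rdiv. reflexivity.
Qed.

Lemma cm_sq (x : R) (z : C) : Cmod (Cmult (RtoC x) z) ^ 2 = x ^ 2 * Cmod z ^ 2.
Proof. rewrite Cmod_mult, Cmod_R, Rpow_mult_distr, pow2_abs. reflexivity. Qed.

Lemma E_sq alpha m : (Ec alpha / sqrt (INR (fact m))) ^ 2 = Ec alpha ^ 2 / INR (fact m).
Proof.
  unfold Rdiv. rewrite Rpow_mult_distr, pow_inv. f_equal. f_equal. simpl. rewrite Rmult_1_r. apply sqrt_sqrt, pos_INR.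
Qed.

Lemma exs_bound (f : nat -> R) (c x : R) : (forall m, 0 <= f m <= c * (x ^ m / INR (fact m))) ->
  ex_series f /\ Series f <= c * exp x.
Proof.
  intros H.
  assert (Hb : ex_series (fun m => c * (x ^ m / INR (fact m)))).
  { apply (ex_series_scal_l c (fun m => x ^ m / INR (fact m))). eexists. apply exp_series. }
  split.
  - apply (exs_le f (fun m => c * (x ^ m / INR (fact m)))); [|exact Hb]. intro m. rewrite Rabs_pos_eq by apply H. apply H.
  - rewrite <- (is_series_unique _ _ (exp_series x)), <- Series_scal_l. apply Series_le; [exact H|exact Hb].
Qed.

Lemma Q_bound alpha b n m : Cmod (Qp alpha b n m) <=
  sum_f_R0 (fun l => Cmod (b l) * INR (fact l)) n * (Cmod alpha + 1) ^ m.
Proof.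
  unfold Qp. eapply Rle_trans; [apply csum_Cmod|]. rewrite (Rmult_comm (sum_f_R0 _ n)), scal_sum.
  apply sum_Rle. intros l _.
  rewrite !Cmod_mult, Cmod_R, Cmod_pow, Rabs_pos_eq by apply pos_INR. rewrite mult_INR.
  assert (INR (binom m l) * Cmod alpha ^ (m - l) <= (Cmod alpha + 1) ^ m).
  { destruct (Nat.leb_spec l m).
    - rewrite Rbinomial. eapply Rle_trans; [|apply (sum_ge_term _ l)].
      + cbv beta. rewrite pow1. lra.
      + intro i. pos.
      + assumption.
    - rewrite binom_gt by lia. simpl INR. rewrite Rmult_0_l. pos. }
  assert (0 <= Cmod (b l)) by apply Cmod_ge_0.
  assert (0 <= INR (fact l)) by apply pos_INR.
  assert (0 <= Cmod alpha ^ (m - l)) by pos.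
  assert (0 <= INR (binom m l)) by apply pos_INR.
  replace (Cmod (b l) * (INR (binom m l) * INR (fact l) * Cmod alpha ^ (m - l)))
    with ((Cmod (b l) * INR (fact l)) * (INR (binom m l) * Cmod alpha ^ (m - l))) by ring.
  apply Rmult_le_compat_l; [pos|assumption].
Qed.

Lemma PQ_bound alpha b n eps m : 0 < eps <= 1 ->
  let beta := fun k : nat => Cplus alpha (RtoC (INR k * eps)) in
  let w := fun k : nat => csum (fun l => Cmult (b l) (RtoC (coef l k / eps ^ l))) n in
  Cmod (Cminus (csum (fun k => Cmult (w k) (Cpow (beta k) m)) n) (Qp alpha b n m))
  <= eps * sum_f_R0 (fun l => Cmod (b l) * (INR (S l) * 2 ^ l)) n * (Cmod alpha + INR n) ^ m.
Proof.
  intros He beta w.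
  assert (HP : csum (fun k => Cmult (w k) (Cpow (beta k) m)) n
     = csum (fun l => Cmult (b l) (Cmult (G alpha eps l m) (RtoC (/ eps ^ l)))) n).
  { unfold w.
    rewrite (csum_ext_le _ (fun k => csum (fun l => Cmult (Cmult (b l) (RtoC (/ eps ^ l))) (Cmult (RtoC (coef l k)) (Cpow (beta k) m))) n)).
    2:{ intros k _. rewrite Cmult_comm, <- csum_scal. apply csum_ext_le. intros l _.
        unfold Rdiv. rewrite RtoC_mult. ring. }
    rewrite csum_swap. apply csum_ext_le. intros l Hl.
    rewrite csum_scal. unfold G.
    rewrite (csum_zero_beyond _ l n Hl).
    2:{ intros k Hk. rewrite coef_gt by exact Hk. ring. }
    unfold beta. ring. }
  rewrite HP. unfold Qp. rewrite <- csum_minus.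
  eapply Rle_trans; [apply csum_Cmod|].
  rewrite (Rmult_comm eps), Rmult_assoc, (Rmult_comm (sum_f_R0 _ n)), scal_sum.
  apply sum_Rle. intros l Hl.
  match goal with |- Cmod ?z <= _ =>
    replace z with (Cmult (b l) (Cminus (Cmult (G alpha eps l m) (RtoC (/ eps ^ l)))
               (Cmult (RtoC (INR (binom m l * fact l))) (Cpow alpha (m - l))))) by ring end.
  rewrite Cmod_mult.
  pose proof (G_err alpha eps l m He) as HG.
  assert (Hp : (Cmod alpha + INR l) ^ m <= (Cmod alpha + INR n) ^ m).
  { apply pow_incr. split; [pos|]. apply Rplus_le_compat_l, le_INR, Hl. }
  assert (0 <= Cmod (b l)) by apply Cmod_ge_0.
  assert (0 <= eps * (INR (S l) * 2 ^ l)) by pos.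
  replace (Cmod (b l) * (INR (S l) * 2 ^ l) * (eps * (Cmod alpha + INR n) ^ m))
    with (Cmod (b l) * (eps * (INR (S l) * 2 ^ l) * (Cmod alpha + INR n) ^ m)) by ring.
  apply Rmult_le_compat_l; [assumption|].
  eapply Rle_trans; [exact HG|]. apply Rmult_le_compat_l; assumption.
Qed.

Lemma frac_le1 x : 0 <= x -> x / (x + 1) <= 1.
Proof.
  intro H. replace (x / (x + 1)) with (1 - / (x + 1)) by (field; lra).
  assert (0 < / (x + 1)) by (apply Rinv_0_lt_compat; lra). lra.
Qed.

Lemma main_approx alpha b n : approximable (poly_adag b n (coh alpha)) (n + 1).
Proof.
  set (E := Ec alpha).
  set (K := sum_f_R0 (fun l => Cmod (b l) * (INR (S l) * 2 ^ l)) n).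
  set (R0 := Cmod alpha + INR n).
  set (K1 := sum_f_R0 (fun l => Cmod (b l) * INR (fact l)) n).
  assert (HK : 0 <= K) by (apply cond_pos_sum; intro; pos).
  assert (HK1 : 0 <= K1) by (apply cond_pos_sum; intro; pos).
  apply approx_of_l2.
  - apply (exs_bound _ (E ^ 2 * K1 ^ 2) ((Cmod alpha + 1) ^ 2)).
    intro m. split; [apply pow2_ge_0|].
    rewrite psi_formula, cm_sq, E_sq. fold E.
    pose proof (Q_bound alpha b n m) as HQ. fold K1 in HQ.
    assert (Cmod (Qp alpha b n m) ^ 2 <= (K1 * (Cmod alpha + 1) ^ m) ^ 2) by (apply pow_incr; split; [apply Cmod_ge_0| exact HQ]).
    rewrite Rpow_mult_distr, <- pow_mult, Nat.mul_comm, pow_mult in H.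
    assert (0 < INR (fact m)) by (apply lt_0_INR, lt_O_fact).
    unfold Rdiv. replace (E ^ 2 * K1 ^ 2 * (((Cmod alpha + 1) ^ 2) ^ m * / INR (fact m)))
      with (E ^ 2 * / INR (fact m) * (K1 ^ 2 * ((Cmod alpha + 1) ^ 2) ^ m)) by ring.
    apply Rmult_le_compat_l; [|exact H].
    apply Rmult_le_pos; [apply pow2_ge_0| left; apply Rinv_0_lt_compat; exact H0].
  - intros eta Heta.
    set (C0 := K ^ 2 * E ^ 2 * exp (R0 ^ 2)).
    assert (HC0 : 0 <= C0) by (unfold C0; pos; left; apply exp_pos).
    set (eps := Rmin 1 (eta / (C0 + 1))).
    assert (Hq : 0 < eta / (C0 + 1)) by (apply Rdiv_lt_0_compat; lra).
    assert (He : 0 < eps <= 1) by (unfold eps; split; [apply Rmin_case; lra| apply Rmin_l]).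
    assert (He2 : eps <= eta / (C0 + 1)) by apply Rmin_r.
    set (beta := fun k : nat => Cplus alpha (RtoC (INR k * eps))).
    set (w := fun k : nat => csum (fun l => Cmult (b l) (RtoC (coef l k / eps ^ l))) n).
    set (F := fun k : nat => (Cmult (RtoC (E / exp (- (Cmod (beta k) ^ 2) / 2))) (w k), beta k)).
    exists (map F (seq 0 (S n))).
    assert (Hpt : forall m, Cminus (superpos (map F (seq 0 (S n))) m) (poly_adag b n (coh alpha) m)
       = Cmult (RtoC (E / sqrt (INR (fact m)))) (Cminus (csum (fun k => Cmult (w k) (Cpow (beta k) m)) n) (Qp alpha b n m))).
    { intro m. rewrite superpos_seq, psi_formula. fold E.
      rewrite (csum_ext_le _ (fun k => Cmult (RtoC (E / sqrt (INR (fact m)))) (Cmult (w k) (Cpow (beta k) m)))).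
      2:{ intros k _. unfold F; cbn [fst snd]. unfold coh.
          assert (Hx : 0 < exp (- (Cmod (beta k) ^ 2) / 2)) by apply exp_pos.
          pose proof (sqrt_fact_pos m).
          assert (Hr : E / exp (- (Cmod (beta k) ^ 2) / 2) * (exp (- (Cmod (beta k) ^ 2) / 2) / sqrt (INR (fact m)))
                     = E / sqrt (INR (fact m))) by (field; split; lra).
          rewrite <- Hr, RtoC_mult. ring. }
      rewrite csum_scal. ring. }
    assert (Hbd : ex_series (fun m => Cmod (Cminus (superpos (map F (seq 0 (S n))) m) (poly_adag b n (coh alpha) m)) ^ 2)
       /\ Series (fun m => Cmod (Cminus (superpos (map F (seq 0 (S n))) m) (poly_adag b n (coh alpha) m)) ^ 2)
          <= eps ^ 2 * K ^ 2 * E ^ 2 * exp (R0 ^ 2)).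
    { apply (exs_bound _ (eps ^ 2 * K ^ 2 * E ^ 2) (R0 ^ 2)). intro m.
      split; [apply pow2_ge_0|].
      rewrite Hpt, cm_sq. unfold E. rewrite E_sq. fold E.
      pose proof (PQ_bound alpha b n eps m He) as HB. cbv zeta in HB. fold K R0 in HB. fold beta w in HB.
      assert (Cmod (Cminus (csum (fun k => Cmult (w k) (Cpow (beta k) m)) n) (Qp alpha b n m)) ^ 2 <= (eps * K * R0 ^ m) ^ 2)
        by (apply pow_incr; split; [apply Cmod_ge_0| exact HB]).
      rewrite !Rpow_mult_distr, <- pow_mult, Nat.mul_comm, pow_mult in H.
      assert (0 < INR (fact m)) by (apply lt_0_INR, lt_O_fact).
      unfold Rdiv. replace (eps ^ 2 * K ^ 2 * E ^ 2 * ((R0 ^ 2) ^ m * / INR (fact m)))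
        with (E ^ 2 * / INR (fact m) * (eps ^ 2 * K ^ 2 * (R0 ^ 2) ^ m)) by ring.
      apply Rmult_le_compat_l; [|exact H].
      apply Rmult_le_pos; [apply pow2_ge_0| left; apply Rinv_0_lt_compat; exact H0]. }
    destruct Hbd as [Hb1 Hb2].
    split; [|split].
    + rewrite length_map, length_seq. lia.
    + exact Hb1.
    + eapply Rle_trans; [exact Hb2|].
      replace (eps ^ 2 * K ^ 2 * E ^ 2 * exp (R0 ^ 2)) with (eps * (eps * C0)) by (unfold C0; ring).
      assert (eps * C0 <= eta / (C0 + 1) * C0) by (apply Rmult_le_compat_r; lra).
      assert (eta / (C0 + 1) * C0 <= eta).
      { unfold Rdiv. replace (eta * / (C0 + 1) * C0) with (eta * (C0 / (C0 + 1))) by (field; lra).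
        assert (C0 / (C0 + 1) <= 1) by (apply frac_le1; lra). rewrite <- (Rmult_1_r eta) at 2. apply Rmult_le_compat_l; lra. }
      assert (0 <= eps * C0) by nra. nra.
Qed.


Lemma approx_le_of psi k : approximable psi k -> approx_coh_rank_le psi k.
Proof.
  induction k as [k IH] using (well_founded_induction Wf_nat.lt_wf). intro H.
  destruct (classic (exists j, (j < k)%nat /\ approximable psi j)) as [[j [Hj Ha]]|Hn].
  - destruct (IH j Hj Ha) as [j' [Hj' Hr]]. exists j'. split; [lia|exact Hr].
  - exists k. split; [lia|]. split; [exact H|]. intros j Hj Ha. apply Hn. exists j. auto.
Qed.

Definition b1 (l : nat) : C := if Nat.eqb l 1 then RtoC 1 else RtoC 0.

Lemma adag_poly alpha : poly_adag b1 1 (coh alpha) = adag (coh alpha).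
Proof.
  apply functional_extensionality. intro k. unfold poly_adag, b1. simpl. ring.
Qed.

Lemma adag_approx2 alpha : approximable (adag (coh alpha)) 2.
Proof. rewrite <- adag_poly. apply (main_approx alpha b1 1). Qed.

Lemma psi0_val m : adag (coh (RtoC 0)) m = if Nat.eqb m 1 then RtoC 1 else RtoC 0.
Proof.
  destruct m as [|m]; [reflexivity|]. unfold adag, coh.
  destruct m as [|m].
  - simpl. rewrite Cmod_0. replace (- (0 * (0 * 1)) / 2) with 0 by field. rewrite exp_0.
    rewrite sqrt_1. replace (1 / 1) with 1 by field. apply injective_projections; simpl; ring.
  - simpl Nat.eqb. rewrite Cpow_S. ring.
Qed.

Lemma coh_sq beta m : Cmod (coh beta m) ^ 2 = exp (- (Cmod beta ^ 2)) * ((Cmod beta ^ 2) ^ m / INR (fact m)).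
Proof.
  unfold coh. rewrite cm_sq, Cmod_pow.
  unfold Rdiv. rewrite Rpow_mult_distr, pow_inv.
  replace ((sqrt (INR (fact m))) ^ 2) with (INR (fact m)) by (simpl; rewrite Rmult_1_r, sqrt_sqrt; [reflexivity| apply pos_INR]).
  replace (exp (- Cmod beta ^ 2 * / 2) ^ 2) with (exp (- (Cmod beta ^ 2))).
  2:{ simpl. rewrite (Rmult_1_r (exp _)), <- exp_plus. f_equal. field. }
  rewrite <- !pow_mult, Nat.mul_comm. ring.
Qed.

Lemma RtoC10 : RtoC 1 <> RtoC 0.
Proof. intro H. apply (f_equal fst) in H. simpl in H. lra. Qed.

Lemma xexp_le x : 0 <= x -> exp (- x) * x <= 1 / 2.
Proof.
  intro Hx. pose proof (exp_ge_taylor x 2 Hx) as H. simpl in H.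
  rewrite exp_Ropp. pose proof (exp_pos x).
  assert (2 * x <= exp x) by (unfold Rdiv in H; nra).
  assert (0 < / exp x) by (apply Rinv_0_lt_compat; lra).
  replace (1/2) with (/ exp x * (exp x / 2)) by (field; lra). 
  apply Rmult_le_compat_l; lra.
Qed.

Lemma not_approx_psi0 j : (j < 2)%nat -> ~ approximable (adag (coh (RtoC 0))) j.
Proof.
  intros Hj [H|H].
  - specialize (H 1%nat). rewrite psi0_val in H. simpl in H. exact (RtoC10 H).
  - destruct (H (1/2) ltac:(lra)) as [phi [[Hnz [l [Hlen Hphi]]] Hfid]].
    destruct l as [|[c beta] l'].
    + destruct Hnz as [m Hm]. apply Hm. rewrite Hphi. reflexivity.
    + destruct l'; [|simpl in Hlen; lia].
      assert (Hphim : forall m, phi m = Cmult c (coh beta m)).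
      { intro m. rewrite Hphi. simpl. ring. }
      assert (Hc : c <> RtoC 0).
      { intro Hc. destruct Hnz as [m Hm]. apply Hm. rewrite Hphim, Hc. ring. }
      set (x := Cmod beta ^ 2).
      assert (Hx : 0 <= x) by (unfold x; apply pow2_ge_0).
      assert (Hinner : inner (adag (coh (RtoC 0))) phi = phi 1%nat).
      { unfold inner.
        rewrite (Series_ext _ (fun m => if Nat.eqb m 1 then Re (phi 1%nat) else 0)).
        2:{ intro m. rewrite psi0_val. destruct (Nat.eqb_spec m 1).
            - subst. unfold Re, Cconj, Cmult. simpl. ring.
            - unfold Re, Cconj, Cmult. simpl. ring. }
        rewrite (Series_ext (fun n => Im _) (fun m => if Nat.eqb m 1 then Im (phi 1%nat) else 0)).
        2:{ intro m. rewrite psi0_val. destruct (Nat.eqb_spec m 1).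
            - subst. unfold Im, Cconj, Cmult. simpl. ring.
            - unfold Im, Cconj, Cmult. simpl. ring. }
        rewrite !Series_single. destruct (phi 1%nat). reflexivity. }
      assert (Hn0 : norm2 (adag (coh (RtoC 0))) = 1).
      { unfold norm2. rewrite (Series_ext _ (fun m => if Nat.eqb m 1 then 1 else 0)).
        - apply Series_single.
        - intro m. rewrite psi0_val. destruct (Nat.eqb m 1).
          + rewrite Cmod_1. ring.
          + rewrite Cmod_0. ring. }
      assert (Hnp : norm2 phi = Cmod c ^ 2).
      { unfold norm2.
        rewrite (Series_ext _ (fun m => (Cmod c ^ 2 * exp (- x)) * (x ^ m / INR (fact m)))).
        - rewrite Series_scal_l, (is_series_unique _ _ (exp_series x)).
          rewrite Rmult_assoc, <- exp_plus. replace (- x + x) with 0 by ring. rewrite exp_0. ring.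
        - intro m. rewrite Hphim, Cmod_mult, Rpow_mult_distr, coh_sq. fold x. ring. }
      assert (Hc2 : 0 < Cmod c ^ 2) by (apply pow_lt, Cmod_gt_0, Hc).
      unfold fidelity in Hfid. rewrite Hinner, Hn0, Hnp, Hphim, Cmod_mult, Rpow_mult_distr, coh_sq in Hfid.
      fold x in Hfid. simpl fact in Hfid. rewrite pow_1 in Hfid.
      assert (Hcm : 0 < Cmod c) by (apply Cmod_gt_0, Hc).
      replace (Cmod c ^ 2 * (exp (- x) * (x / INR 1)) / (1 * Cmod c ^ 2)) with (exp (- x) * x) in Hfid
        by (simpl INR; field; lra).
      pose proof (xexp_le x Hx). lra.
Qed.

Theorem corollary2 :
  op_approx_coh_rank adag 2 /\
  (forall (n : nat) (b : nat -> C), op_approx_coh_rank_le (poly_adag b n) (n + 1)).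
Proof.
  split.
  - split.
    + intro alpha. apply approx_le_of. apply adag_approx2.
    + exists (RtoC 0). split; [apply adag_approx2|]. intros j Hj. apply not_approx_psi0; exact Hj.
  - intros n b alpha. apply approx_le_of. apply main_approx.
Qed.
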